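(* Consider the generalized trimmed lasso problem $$\min_{x_0,\ldots,x_L}\ f(x_0,\ldots,x_L)+\sum_{l=1}^L\gamma_l T_{K_l,m_l,p_l}(D_lx_l-c_l),$$ where $f$ is $M$-smooth on the whole space, and suppose that for every $l\in[L]$ there is $\overline{x}_l$ with $D_l\overline{x}_l=c_l$. Let $x^*=(x_0^*,\ldots,x_L^* )$ be a d-stationary point and $C_0,\ldots,C_L>0$ be constants with $\|x_l^*\|_2\le C_l$ for $l=0,\ldots,L$. If for all $l\in[L]$ $$\gamma_l>\frac{1}{\sigma_{K_l,m_l,p_l}(D_l)}\Big(\|\nabla_{x_l}f(0,\ldots,0)\|_2+M\sqrt{\textstyle\sum_{k=0}^L C_k^2}\Big),$$ then $T_{K_l,m_l,p_l}(D_lx_l^*-c_l)=0$ for all $l\in[L]$. For those $l$ with $p_l=1$, $D_l=I$, $c_l=0$, the threshold on the right-hand side may be replaced by $\|\nabla_{x_l}f(0,\ldots,0)\|_\infty+M\sqrt{\sum_{k=0}^LC_k^2}$.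
   Context: Trimmed $\ell_1$ norm: for $z=(z_1^\top,\ldots,z_m^\top)^\top\in\mathbb{R}^{mp}$, $z_i\in\mathbb{R}^p$, $K\in\{0,\ldots,m-1\}$: $T_{K,m,p}(z)=\min_{\Lambda\subset[m],|\Lambda|=m-K}\sum_{i\in\Lambda}\|z_i\|_2$. Data: $n_0\ge0$, $\gamma_l>0$, $K_l\in\{0,\ldots,m_l-1\}$, $c_l\in\mathbb{R}^{m_lp_l}$, $D_l\ne0$ an $m_lp_l\times n_l$ matrix. $f$ is $M$-smooth if it is continuously differentiable with $\|\nabla f(x)-\nabla f(y)\|_2\le M\|x-y\|_2$; $\nabla_{x_l}f$ is the block of the gradient for $x_l$. $x^*$ is d-stationary if the directional derivative of the objective at $x^*$ is $\ge0$ in every direction. $\sigma_{\min}(A)$ = smallest nonzero singular value of $A\ne0$. For $D$ with $p\times n$ blocks $(D)_1,\ldots,(D)_m$ and $(D)_\Lambda$ the submatrix of blocks in $\Lambda$: $\sigma_{K,m,p}(D)=\sigma_{\min}(D)$ if $D$ is surjective, else $\min\{\sigma_{\min}((D)_\Lambda)\mid |\Lambda|=m-K,(D)_\Lambda\ne0\}$. *)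

(* Defs.v *)
From HB Require Import structures.
From mathcomp Require Import all_boot all_order all_algebra.
From mathcomp Require Import all_classical all_reals all_analysis.
Set Implicit Arguments. Unset Strict Implicit. Unset Printing Implicit Defensive.
Import Order.TTheory GRing.Theory Num.Theory.
Import numFieldNormedType.Exports.
Local Open Scope classical_set_scope.
Local Open Scope ring_scope.

Section Defs.
Variable R : realType.

Definition vnorm k (v : 'cV[R]_k) : R := Num.sqrt (\sum_(i < k) v i 0 ^+ 2).
Definition vnorm_inf k (v : 'cV[R]_k) : R := \big[Order.max/0]_(i < k) `|v i 0|.

(** Block indexing of R^{m p}: block i (0-based), entry j  |->  i*p + j. *)
Lemma blk_lt m p (i : 'I_m) (j : 'I_p) : (i * p + j < m * p)%N.
Proof.
case: i j => i Hi [j Hj] /=.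
apply: (@leq_trans ((i.+1) * p)); first by rewrite mulSn [(p + _)%N]addnC ltn_add2l.
by rewrite leq_mul2r Hi orbT.
Qed.
Definition blk m p (i : 'I_m) (j : 'I_p) : 'I_(m * p) := Ordinal (blk_lt i j).

Definition block m p (z : 'cV[R]_(m * p)) (i : 'I_m) : 'cV[R]_p :=
  \col_(j < p) z (blk i j) 0.

(** The bigop minimum starts from the (larger or equal) full sum, which is
    never smaller than any of the candidate sums, so it is the true minimum. *)
Definition trimmed (K m p : nat) (z : 'cV[R]_(m * p)) : R :=
  \big[Order.min/ \sum_(i < m) vnorm (block z i)]_(S : {set 'I_m} | #|S| == (m - K)%N)
     \sum_(i in S) vnorm (block z i).

Definition sigma_min r c (A : 'M[R]_(r, c)) : R :=
  Num.sqrt (inf [set lam : R | eigenvalue (A^T *m A) lam /\ 0 < lam]).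

Lemma div_lt c p (k : 'I_(c * p)) : (k %/ p < c)%N.
Proof.
case: k => k Hk /=; case: p Hk => [|p] Hk; first by rewrite muln0 in Hk.
by rewrite ltn_divLR.
Qed.
Lemma mod_lt c p (k : 'I_(c * p)) : (k %% p < p)%N.
Proof.
case: k => k Hk /=; case: p Hk => [|p] Hk; first by rewrite muln0 in Hk.
by rewrite ltn_mod.
Qed.

(** Row index map of the submatrix (D)_Lambda made of the blocks in Lambda
    (blocks taken in increasing order). *)
Definition subblk_idx m p (S : {set 'I_m}) (k : 'I_(#|S| * p)) : 'I_(m * p) :=
  blk (@enum_val _ (mem S) (Ordinal (div_lt k))) (Ordinal (mod_lt k)).

Definition subblocks m p n (D : 'M[R]_(m * p, n)) (S : {set 'I_m})
  : 'M[R]_(#|S| * p, n) := rowsub (@subblk_idx m p S) D.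

Definition sigmaK (K m p n : nat) (D : 'M[R]_(m * p, n)) : R :=
  if `[< forall y : 'cV[R]_(m * p), exists x : 'cV[R]_n, D *m x = y >]
  then sigma_min D
  else inf [set s : R | exists S : {set 'I_m},
              [/\ #|S| = (m - K)%N, subblocks D S != 0 & s = sigma_min (subblocks D S)]].

Definition bvec (L : nat) (n : 'I_L.+1 -> nat) := forall l : 'I_L.+1, 'cV[R]_(n l).

Definition bzero (L : nat) (n : 'I_L.+1 -> nat) : bvec n := fun l => 0.
Definition badd (L : nat) (n : 'I_L.+1 -> nat) (x y : bvec n) : bvec n := fun l => x l + y l.
Definition bopp (L : nat) (n : 'I_L.+1 -> nat) (x : bvec n) : bvec n := fun l => - x l.
Definition bscale (L : nat) (n : 'I_L.+1 -> nat) (t : R) (x : bvec n) : bvec n := fun l => t *: x l.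
Definition bdot (L : nat) (n : 'I_L.+1 -> nat) (x y : bvec n) : R := \sum_(l < L.+1) \sum_(i < n l) x l i 0 * y l i 0.
Definition bnorm (L : nat) (n : 'I_L.+1 -> nat) (x : bvec n) : R := Num.sqrt (bdot x x).

Definition is_gradient (L : nat) (n : 'I_L.+1 -> nat) (f : bvec n -> R) (g : bvec n -> bvec n) : Prop :=
  forall x : bvec n, forall eps : R, 0 < eps -> exists2 delta : R, 0 < delta &
    forall h : bvec n, bnorm h < delta ->
      `|f (badd x h) - f x - bdot (g x) h| <= eps * bnorm h.

Definition M_smooth (L : nat) (n : 'I_L.+1 -> nat) (M : R) (f : bvec n -> R) (g : bvec n -> bvec n) : Prop :=
  is_gradient f g /\
  forall x y : bvec n, bnorm (badd (g x) (bopp (g y))) <= M * bnorm (badd x (bopp y)).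

Definition dstationary (L : nat) (n : 'I_L.+1 -> nat) (F : bvec n -> R) (x : bvec n) : Prop :=
  forall d : bvec n, exists2 lam : R,
    (fun t : R => (F (badd x (bscale t d)) - F x) / t) @ 0^'+ --> lam & 0 <= lam.

End Defs.

(* Main.v *)
Require Import Defs.
From HB Require Import structures.
From mathcomp Require Import all_boot all_order all_algebra.
From mathcomp Require Import all_classical all_reals all_analysis.
From mathcomp Require Import zify ring lra.
From Stdlib Require Import Lia.
Import Order.TTheory GRing.Theory Num.Theory.
Import numFieldNormedType.Exports.
Local Open Scope ring_scope.
Set Implicit Arguments. Unset Strict Implicit. Unset Printing Implicit Defensive.
Module M_LA.
Local Open Scope classical_set_scope.
Local Open Scope ring_scope.
Section LA.
Variable R : realType.

Definition dotr k (u v : 'rV[R]_k) : R := \sum_(i < k) u 0 i * v 0 i.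
Definition sqn k (u : 'rV[R]_k) : R := dotr u u.

Lemma dotrC k (u v : 'rV[R]_k) : dotr u v = dotr v u.
Proof. by apply: eq_bigr => i _; rewrite mulrC. Qed.

Lemma dotrDl k (u v w : 'rV[R]_k) : dotr (u + v) w = dotr u w + dotr v w.
Proof. by rewrite /dotr -big_split; apply: eq_bigr => i _; rewrite !mxE mulrDl. Qed.

Lemma dotrZl k a (u w : 'rV[R]_k) : dotr (a *: u) w = a * dotr u w.
Proof. by rewrite /dotr mulr_sumr; apply: eq_bigr => i _; rewrite !mxE mulrA. Qed.

Lemma dotrNl k (u w : 'rV[R]_k) : dotr (- u) w = - dotr u w.
Proof. by rewrite -scaleN1r dotrZl mulN1r. Qed.

Lemma dotrE k (u v : 'rV[R]_k) : dotr u v = (u *m v^T) 0 0.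
Proof. by rewrite mxE; apply: eq_bigr => i _; rewrite !mxE. Qed.

Lemma sqn_ge0 k (u : 'rV[R]_k) : 0 <= sqn u.
Proof. by apply: sumr_ge0 => i _; rewrite -expr2 sqr_ge0. Qed.

Lemma sqn_eq0 k (u : 'rV[R]_k) : sqn u = 0 -> u = 0.
Proof.
move=> h; apply/rowP => i; rewrite mxE.
have h2 : \sum_(j < k) u 0 j ^+ 2 = 0.
  rewrite -[RHS]h /sqn /dotr; apply: eq_bigr => j _; exact: expr2.
have := psumr_eq0P (fun j _ => sqr_ge0 (u 0 j)) h2 (i:=i) isT.
by move/eqP; rewrite sqrf_eq0 => /eqP.
Qed.

Lemma dotr_mull k r (u : 'rV[R]_k) (A : 'M[R]_(k, r)) (w : 'rV[R]_r) :
  dotr (u *m A) w = dotr u (w *m A^T).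
Proof. by rewrite !dotrE trmx_mul trmxK mulmxA. Qed.

Lemma mxtr_eq0 a b (X : 'M[R]_(a, b)) : X *m X^T = 0 -> X = 0.
Proof.
move=> h; apply/row_matrixP => i; rewrite row0; apply: sqn_eq0.
have -> : sqn (row i X) = (X *m X^T) i i.
  by rewrite mxE; apply: eq_bigr => j _; rewrite !mxE.
by rewrite h mxE.
Qed.

Lemma W_inj c r (A : 'M[R]_(r, c)) (v : 'rV[R]_c) :
  (v <= A)%MS -> v *m A^T = 0 -> v = 0.
Proof.
move=> /submxP [u ->] h; apply: mxtr_eq0.
by rewrite trmx_mul mulmxA h mul0mx.
Qed.

Lemma W_proj c r (A : 'M[R]_(r, c)) (x : 'rV[R]_c) :
  exists2 d : 'rV[R]_c, (d <= A)%MS & d *m A^T = x *m A^T.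
Proof.
have sub1 : (A *m A^T <= A^T)%MS by apply: submxMl.
have kerS : (kermx (A *m A^T) <= kermx A)%MS.
  apply/sub_kermxP; apply: mxtr_eq0.
  have /sub_kermxP h := submx_refl (kermx (A *m A^T)).
  by rewrite trmx_mul mulmxA -(mulmxA _ A) h mul0mx.
have rk : (\rank A^T <= \rank (A *m A^T))%N.
  have := mxrankS kerS; rewrite !mxrank_ker mxrank_tr.
  have := rank_leq_row A; have := rank_leq_row (A *m A^T).
  lia.
have /eqmxP eqm : (A *m A^T == A^T)%MS.
  by have := mxrank_leqif_eq sub1 => /leqifP; case: ifP => // _; rewrite ltnNge rk.
have : (x *m A^T <= A *m A^T)%MS by rewrite eqm submxMl.
move=> /submxP [u hu]; exists (u *m A); first exact: submxMl.
by rewrite hu mulmxA.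
Qed.

Lemma cont_sum (T : topologicalType) (I : Type) (s : seq I) (P : pred I)
  (F : I -> T -> R) : (forall i, continuous (F i)) ->
  continuous (fun x => \sum_(i <- s | P i) F i x).
Proof.
move=> hF; elim: s => [|a s IH].
  have -> : (fun x => \sum_(i <- [::] | P i) F i x) = fun=> 0.
    by apply: funext => x; rewrite big_nil.
  exact: cst_continuous.
have -> : (fun x => \sum_(i <- a :: s | P i) F i x) =
   fun x => (if P a then F a x else 0) + \sum_(i <- s | P i) F i x.
  by apply: funext => x; rewrite big_cons; case: (P a); rewrite ?add0r.
move=> x; apply: continuousD; last exact: IH.
by case: (P a); [exact: hF | exact: cst_continuous].
Qed.

Lemma cont_lin c k (N : 'M[R]_(c, k)) j :
  continuous (fun v : 'rV[R]_c => (v *m N) 0 j).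
Proof.
have -> : (fun v : 'rV[R]_c => (v *m N) 0 j) =
   fun v => \sum_(i < c) v 0 i * N i j.
  by apply: funext => v; rewrite mxE.
apply: cont_sum => i x; apply: continuousM; first exact: coord_continuous.
exact: cst_continuous.
Qed.

Lemma cont_sqn c k (N : 'M[R]_(c, k)) :
  continuous (fun v : 'rV[R]_c => sqn (v *m N)).
Proof.
rewrite /sqn /dotr; apply: cont_sum => j x.
by apply: continuousM; apply: cont_lin.
Qed.

Lemma sqn_mul1 c (v : 'rV[R]_c) : sqn (v *m 1%:M) = sqn v.
Proof. by rewrite mulmx1. Qed.

Lemma coord_le_sqn c (v : 'rV[R]_c) j : v 0 j ^+ 2 <= sqn v.
Proof.
rewrite /sqn /dotr (bigD1 j) //= -expr2 lerDl.
by apply: sumr_ge0 => i _; rewrite -expr2 sqr_ge0.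
Qed.

Definition Sset c r (A : 'M[R]_(r, c)) :=
  [set v : 'rV[R]_c | (v <= A)%MS /\ sqn v = 1].

Lemma Sset_compact c r (A : 'M[R]_(r, c)) : compact (Sset A).
Proof.
apply: bounded_closed_compact.
  rewrite /= /bounded_near.
  apply: filterS (nbhs_pinfty_ge (r := 1) (num_real 1)) => M M1 v [_ hv].
  rewrite /= [X in X <= _]/Num.norm /= mx_normrE; apply: bigmax_le; first by apply: le_trans M1.
  move=> [i j] _ /=; apply: le_trans M1.
  have := coord_le_sqn v j; rewrite hv (ord1 i) => h.
  have [ge|lt] := lerP 0 (v 0 j); [rewrite ger0_norm // | rewrite ltr0_norm //]; nra.
have -> : Sset A = (fun v => sqn (v *m cokermx A) + (sqn (v *m 1%:M) - 1) ^+ 2) @^-1` [set x | x = 0].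
  apply/seteqP; split => v /=.
    move=> [hA hv]; move: hA; rewrite submxE => /eqP ->; rewrite mulmx1 hv subrr expr0n /= addr0.
    by rewrite /sqn /dotr big1 // => i _; rewrite mxE mul0r.
  move/eqP; rewrite paddr_eq0 ?sqn_ge0 ?sqr_ge0 // => /andP [/eqP h1].
  rewrite sqrf_eq0 subr_eq0 mulmx1 => /eqP h2; split => //.
  by rewrite submxE (sqn_eq0 h1).
apply: preimage_closed; last exact: closed_eq.
move=> v _.
apply: (continuousD (f := fun v0 : 'rV[R]_c => sqn (v0 *m cokermx A))
  (g := fun v0 : 'rV[R]_c => (sqn (v0 *m 1%:M) - 1) ^+ 2)); first exact: cont_sqn.
have -> : (fun v0 : 'rV[R]_c => (sqn (v0 *m 1%:M) - 1) ^+ 2) =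
  (fun v0 => sqn (v0 *m 1%:M) - 1) \* (fun v0 => sqn (v0 *m 1%:M) - 1).
  by apply: funext => w /=; rewrite expr2.
apply: continuousM; (apply: (continuousB (f := fun v0 : 'rV[R]_c => sqn (v0 *m 1%:M)) (g := fun=> 1));
  [exact: cont_sqn | exact: cst_continuous]).
Qed.

Lemma sqnZ k a (u : 'rV[R]_k) : sqn (a *: u) = a ^+ 2 * sqn u.
Proof. by rewrite /sqn dotrZl dotrC dotrZl mulrA expr2. Qed.

Lemma sqnD k (u v : 'rV[R]_k) : sqn (u + v) = sqn u + 2 * dotr u v + sqn v.
Proof.
rewrite /sqn dotrDl (dotrC u (u + v)) (dotrC v (u + v)) !dotrDl (dotrC v u); ring.
Qed.

Lemma sqn_gt0 k (u : 'rV[R]_k) : u != 0 -> 0 < sqn u.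
Proof.
move=> hu; rewrite lt_def sqn_ge0 andbT; apply/eqP => h.
by move/eqP: hu; apply; apply: sqn_eq0.
Qed.

Lemma sqn0 k : sqn (0 : 'rV[R]_k) = 0.
Proof. by rewrite /sqn /dotr big1 // => j _; rewrite mxE mul0r. Qed.

Lemma quad_nonneg (al be : R) : (forall t, 0 <= 2 * t * al + t ^+ 2 * be) -> al = 0.
Proof.
move=> h; apply/eqP; apply: contraT => hal.
set k := `|be| + 1.
have k0 : 0 < k by rewrite /k ltr_pwDr // normr_ge0.
have hb : be <= k by rewrite /k; apply: le_trans (ler_norm be) _; rewrite lerDl.
have := h (- al / k).
have al2 : 0 < al ^+ 2 by rewrite exprn_even_gt0.
have e : 2 * (- al / k) * al + (- al / k) ^+ 2 * be = al ^+ 2 / k * (- 2 + be / k).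
  by field; rewrite gt_eqF.
rewrite e pmulr_rge0 ?divr_gt0 // => h2.
have : be / k <= 1 by rewrite ler_pdivrMr // mul1r.
lra.
Qed.

Lemma rayleigh c r (A : 'M[R]_(r, c)) : A != 0 ->
  exists mu, [/\ 0 < mu, eigenvalue (A^T *m A) mu,
    (forall lam, eigenvalue (A^T *m A) lam -> 0 < lam -> mu <= lam) &
    (forall w, (w <= A)%MS -> mu * sqn w <= sqn (w *m A^T))].
Proof.
move=> hA.
have : [exists i, row i A != 0].
  apply: contraLR hA; rewrite negb_exists negbK => /forallP h.
  by apply/eqP/row_matrixP => i; rewrite row0; apply/eqP; rewrite -[_ == _]negbK h.
move=> /existsP [i hi].
set u := row i A.
have su := sqn_gt0 hi.
have S0 : Sset A !=set0.
  exists ((Num.sqrt (sqn u))^-1 *: u); split; first by rewrite scalemx_sub // row_sub.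
  by rewrite sqnZ exprVn sqr_sqrtr ?mulVf ?gt_eqF // ltW.
have [v0 v0S v0min] := EVT_min_rV S0 (Sset_compact (A:=A))
   (continuous_subspaceT (cont_sqn (N:=A^T))).
move: v0S; rewrite in_setE => -[v0W v01].
set mu := sqn (v0 *m A^T).
have v0n0 : v0 != 0.
  by apply/eqP => h; move: v01; rewrite h sqn0 => /eqP; rewrite eq_sym oner_eq0.
have mu0 : 0 < mu.
  apply: sqn_gt0; apply/eqP => h; move/eqP: v0n0; apply; exact: W_inj v0W h.
have ray : forall w, (w <= A)%MS -> mu * sqn w <= sqn (w *m A^T).
  move=> w wW; have [->|wn0] := eqVneq w 0.
    by rewrite mul0mx !sqn0 mulr0.
  have sw := sqn_gt0 wn0; set s := Num.sqrt (sqn w).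
  have s0 : 0 < s by rewrite sqrtr_gt0.
  have h : sqn (v0 *m A^T) <= sqn ((s^-1 *: w) *m A^T).
    apply: v0min; rewrite in_setE; split; first exact: scalemx_sub.
    by rewrite sqnZ exprVn sqr_sqrtr ?mulVf ?gt_eqF // ltW.
  rewrite -/mu -scalemxAl sqnZ exprVn (sqr_sqrtr (sqn_ge0 w)) in h.
  apply: le_trans (ler_wpM2r (ltW sw) h) _.
  by rewrite mulrAC mulVf ?gt_eqF // mul1r.
have lag : forall w, (w <= A)%MS -> dotr (v0 *m A^T) (w *m A^T) = mu * dotr v0 w.
  move=> w wW; apply/eqP; rewrite -subr_eq0; apply/eqP.
  apply: (@quad_nonneg _ (sqn (w *m A^T) - mu * sqn w)) => t.
  have := ray (v0 + t *: w); rewrite addmx_sub ?scalemx_sub // => /(_ isT).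
  rewrite mulmxDl -scalemxAl !sqnD !sqnZ v01 -/mu (dotrC v0) (dotrC (v0 *m A^T)) !dotrZl.
  rewrite (dotrC (v0 *m A^T) (t *: _)) dotrZl -subr_ge0 => h.
  apply: le_trans h _; rewrite le_eqVlt; apply/orP; left; apply/eqP; rewrite (dotrC w v0); ring.
have ev : v0 *m (A^T *m A) = mu *: v0.
  set e := v0 *m (A^T *m A) - mu *: v0.
  have eW : (e <= A)%MS by rewrite addmx_sub ?eqmx_opp ?scalemx_sub // mulmxA submxMl.
  have : sqn e = 0.
    rewrite {1}/sqn {1}/e dotrDl dotrNl dotrZl mulmxA dotr_mull (dotrC _ e) lag //.
    by rewrite dotrC subrr.
  by move/sqn_eq0/eqP; rewrite subr_eq0 => /eqP.
exists mu; split => //.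
  by apply/eigenvalueP; exists v0.
move=> lam /eigenvalueP [v hv vn0] lam0.
have vW : (v <= A)%MS.
  have -> : v = lam^-1 *: (v *m (A^T *m A)) by rewrite hv scalerA mulVf ?gt_eqF ?scale1r.
  by rewrite scalemx_sub // mulmxA submxMl.
have := ray v vW; rewrite {2}/sqn -dotr_mull -mulmxA hv dotrZl.
by rewrite ler_pM2r // sqn_gt0.
Qed.

End LA.

Section LA2.
Variable R : realType.

Lemma vnormE k (d : 'cV[R]_k) : vnorm d = Num.sqrt (sqn d^T).
Proof. by rewrite /vnorm /sqn /dotr; congr Num.sqrt; apply: eq_bigr => i _; rewrite !mxE expr2. Qed.

Lemma keyC r c (A : 'M[R]_(r, c)) : A != 0 ->
  0 < sigma_min A /\ forall x : 'cV[R]_c, exists d : 'cV[R]_c,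
     A *m d = A *m x /\ sigma_min A * vnorm d <= vnorm (A *m x).
Proof.
move=> hA; have [mu [mu0 evmu lbmu ray]] := rayleigh hA.
set E := [set lam : R | eigenvalue (A^T *m A) lam /\ 0 < lam].
have Emu : E mu by [].
have infE : inf E = mu.
  apply/eqP; rewrite eq_le; apply/andP; split.
    by apply: (ge_inf (E := E)) => //; exists mu => y [] /lbmu h /h.
  by apply: lb_le_inf; [exists mu | move=> y [] /lbmu h /h].
have sm : sigma_min A = Num.sqrt mu by rewrite /sigma_min -/E infE.
rewrite sm; split; first by rewrite sqrtr_gt0.
move=> x; have [dr drW hdr] := W_proj A x^T.
exists dr^T; split.
  by rewrite -[A *m dr^T]trmxK trmx_mul trmxK hdr trmx_mul !trmxK.
rewrite !vnormE trmxK trmx_mul -hdr -(sqrtrM _ (ltW mu0)).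
by rewrite ler_sqrt ?sqn_ge0 // ray.
Qed.
End LA2.

End M_LA.
Import M_LA.

Module M_BL.
Local Open Scope classical_set_scope.
Local Open Scope ring_scope.
Section BL.
Variable R : realType.

Definition blkof m p (k : 'I_(m * p)) : 'I_m := Ordinal (div_lt k).
Definition inblk m p (k : 'I_(m * p)) : 'I_p := Ordinal (mod_lt k).

Lemma p_gt0 m p (k : 'I_(m * p)) : (0 < p)%N.
Proof. by case: k => k; case: p => // ; rewrite muln0. Qed.

Lemma blkofK m p (i : 'I_m) (j : 'I_p) : blkof (blk i j) = i.
Proof.
apply: val_inj => /=; have p0 : (0 < p)%N by case: j => j /=; case: p => //.
by rewrite divnMDl // divn_small ?addn0.
Qed.

Lemma inblkK m p (i : 'I_m) (j : 'I_p) : inblk (blk i j) = j.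
Proof. by apply: val_inj => /=; rewrite modnMDl modn_small. Qed.

Lemma blkK m p (k : 'I_(m * p)) : blk (blkof k) (inblk k) = k.
Proof. by apply: val_inj => /=; rewrite -divn_eq. Qed.

Lemma blk_sum m p (F : 'I_(m * p) -> R) :
  \sum_(k < m * p) F k = \sum_(i < m) \sum_(j < p) F (blk i j).
Proof.
rewrite pair_big /=.
rewrite (reindex (fun ij : 'I_m * 'I_p => blk ij.1 ij.2)) //=.
exists (fun k => (blkof k, inblk k)) => [[i j] _|k _] /=.
  by rewrite blkofK inblkK.
exact: blkK.
Qed.

Lemma subblk_idx_blk m p (S : {set 'I_m}) (i : 'I_#|S|) (j : 'I_p) :
  subblk_idx (blk i j) = blk (enum_val i) j.
Proof.
rewrite /subblk_idx; congr blk; last by apply: val_inj; rewrite /= modnMDl modn_small.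
congr enum_val; apply: val_inj => /=.
have p0 : (0 < p)%N by case: j => j /=; case: p => //.
by rewrite divnMDl // divn_small ?addn0.
Qed.

Lemma subblk_sum m p (S : {set 'I_m}) (F : 'I_(m * p) -> R) :
  \sum_(k < #|S| * p) F (subblk_idx k) = \sum_(i in S) \sum_(j < p) F (blk i j).
Proof.
rewrite blk_sum (big_enum_val (fun i => \sum_(j < p) F (blk i j))).
by apply: eq_bigr => i _; apply: eq_bigr => j _; rewrite subblk_idx_blk.
Qed.

Lemma vnorm_ge0 k (v : 'cV[R]_k) : 0 <= vnorm v.
Proof. exact: sqrtr_ge0. Qed.

Lemma vnorm_block m p (z : 'cV[R]_(m * p)) i :
  vnorm (block z i) ^+ 2 = \sum_(j < p) z (blk i j) 0 ^+ 2.
Proof.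
rewrite /vnorm sqr_sqrtr; last by apply: sumr_ge0 => j _; rewrite sqr_ge0.
by apply: eq_bigr => j _; rewrite mxE.
Qed.

Lemma sumsq_le (I : finType) (P : pred I) (a : I -> R) :
  (forall i, P i -> 0 <= a i) -> \sum_(i | P i) a i ^+ 2 <= (\sum_(i | P i) a i) ^+ 2.
Proof.
move=> h; rewrite expr2 mulr_suml; apply: ler_sum => i Pi.
rewrite expr2 ler_wpM2l ?h //.
by rewrite (bigD1 i) //= lerDl; apply: sumr_ge0 => j /andP [Pj _]; apply: h.
Qed.

Lemma sqrt_le_of_sq (x y : R) : 0 <= y -> x <= y ^+ 2 -> Num.sqrt x <= y.
Proof.
move=> y0 h; apply: le_trans (_ : Num.sqrt (y ^+ 2) <= y).
  by rewrite ler_sqrt // exprn_ge0.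
by rewrite sqrtr_sqr ger0_norm.
Qed.


Definition Tsum m p (z : 'cV[R]_(m * p)) (S : {set 'I_m}) :=
  \sum_(i in S) vnorm (block z i).

Lemma Tsum_ge0 m p (z : 'cV[R]_(m * p)) (S : {set 'I_m}) : 0 <= Tsum z S.
Proof. by apply: sumr_ge0 => i _; apply: vnorm_ge0. Qed.

Lemma sq_Tsum m p (z : 'cV[R]_(m * p)) (S : {set 'I_m}) :
  \sum_(i in S) \sum_(j < p) z (blk i j) 0 ^+ 2 <= Tsum z S ^+ 2.
Proof.
apply: le_trans (sumsq_le (fun i _ => vnorm_ge0 (block z i))).
by apply: ler_sum => i _; rewrite vnorm_block.
Qed.

Lemma dir_general m p n K (D : 'M[R]_(m * p, n)) (z : 'cV[R]_(m * p))
  (x0 : 'cV[R]_n) (S : {set 'I_m}) :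
  D != 0 -> D *m x0 = z -> #|S| = (m - K)%N -> 0 < Tsum z S ->
  exists d : 'cV[R]_n, [/\ forall i j, i \in S -> (D *m d) (blk i j) 0 = - z (blk i j) 0,
     0 < sigmaK K D & sigmaK K D * vnorm d <= Tsum z S].
Proof.
move=> D0 hz hS hT.
rewrite /sigmaK; case: asboolP => [hs|hns].
  set mz := \col_k (if blkof k \in S then z k 0 else 0).
  have [x hx] := hs (- mz).
  have [sp /(_ x) [d [hd hdb]]] := keyC D0.
  exists d; split => //.
    by move=> i j iS; rewrite hd hx !mxE blkofK iS.
  apply: le_trans hdb _; rewrite hx.
  apply: sqrt_le_of_sq; first exact: Tsum_ge0.
  apply: le_trans (sq_Tsum z S).
  rewrite blk_sum (bigID (fun i => i \in S)) /= [X in _ + X]big1 ?addr0.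
    by apply: ler_sum => i iS; apply: ler_sum => j _; rewrite !mxE blkofK iS sqrrN.
  by move=> i /negbTE iS; apply: big1 => j _; rewrite !mxE blkofK iS oppr0 expr0n.
set A := subblocks D S.
have subm : forall (v : 'cV[R]_n) (k : 'I_(#|S| * p)), (A *m v) k 0 = (D *m v) (subblk_idx k) 0.
  by move=> v k; rewrite !mxE; apply: eq_bigr => j _; rewrite !mxE.
have zA : forall i j (iS : i \in S),
    z (blk i j) 0 = (A *m x0) (blk (enum_rank_in iS i) j) 0.
  by move=> i j iS; rewrite subm subblk_idx_blk enum_rankK_in // hz.
have A0 : A != 0.
  apply/eqP => hA; move: hT; rewrite lt_def => /andP [/eqP []].
  apply: big1 => i iS.
  have -> : block z i = 0.
    by apply/matrixP => j k; rewrite (ord1 k) !mxE (zA _ _ iS) hA mul0mx mxE.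
  by rewrite /vnorm big1 ?sqrtr0 // => j _; rewrite mxE expr0n.
have [sA /(_ x0) [d' [hd' hd'b]]] := keyC A0.
set E := [set s0 : R | exists S' : {set 'I_m}, [/\ #|S'| = (m - K)%N,
   subblocks D S' != 0 & s0 = sigma_min (subblocks D S')]].
have EA : E (sigma_min A) by exists S.
have lbE : lbound E 0 by move=> y [S' [_ _ ->]]; apply: sqrtr_ge0.
have infA : inf E <= sigma_min A by apply: ge_inf EA; exists 0.
set lb := \big[Order.min/1]_(S' : {set 'I_m} | (#|S'| == (m - K)%N) && (subblocks D S' != 0))
   sigma_min (subblocks D S').
have lb0 : 0 < lb.
  apply/bigmin_gtP; split; first exact: ltr01.
  by move=> S' /andP [_ h]; exact: (keyC h).1.
have lbinf : lb <= inf E.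
  apply: lb_le_inf; first by exists (sigma_min A).
  move=> y [S' [h1 h2 ->]]; apply: bigmin_le_cond.
  by apply/andP; split; [apply/eqP | ].
exists (- d'); split.
- move=> i j iS; rewrite mulmxN mxE (zA _ _ iS) -hd'.
  by congr (- _); rewrite subm subblk_idx_blk enum_rankK_in.
- exact: lt_le_trans lbinf.
- have vn : vnorm (- d') = vnorm d'.
    by rewrite /vnorm; congr Num.sqrt; apply: eq_bigr => j _; rewrite mxE sqrrN.
  rewrite vn; apply: le_trans (ler_wpM2r (vnorm_ge0 _) infA) _.
  apply: le_trans hd'b _.
  apply: sqrt_le_of_sq; first exact: Tsum_ge0.
  apply: le_trans (sq_Tsum z S); rewrite -(subblk_sum S (fun k => z k 0 ^+ 2)).
  by apply: ler_sum => k _; rewrite subm hz.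
Qed.

Lemma sum_single k (F : 'I_k -> R) (j0 : 'I_k) :
  (forall j : 'I_k, j != j0 -> F j = 0) -> \sum_(j < k) F j = F j0.
Proof. by move=> h; rewrite (bigD1 j0) //= big1 ?addr0 // => j /h. Qed.

Lemma dir_id m p n (D : 'M[R]_(m * p, n)) (z : 'cV[R]_(m * p)) (S : {set 'I_m}) :
  p = 1%N -> m = n -> (forall i j, D i j = ((i : nat) == j)%:R) ->
  exists d : 'cV[R]_n, (forall i j, i \in S -> (D *m d) (blk i j) 0 = - z (blk i j) 0) /\
    forall g : 'cV[R]_n, \sum_(j < n) g j 0 * d j 0 <= vnorm_inf g * Tsum z S.
Proof.
move=> p1 mn hD.
have ex0 : forall k : 'I_(m * p), exists j0 : 'I_n, (j0 : nat) = k.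
  move=> k; have hk : (k < n)%N by rewrite -mn -[X in (_ < X)%N]muln1 -p1.
  by exists (Ordinal hk).
have Dz : forall (k : 'I_(m * p)) (j : 'I_n), (j : nat) != k -> D k j = 0.
  by move=> k j h; rewrite hD eq_sym (negbTE h).
have DDT : forall k k' : 'I_(m * p), \sum_(j < n) D k j * D k' j = (k == k')%:R.
  move=> k k'; have [j0 hj0] := ex0 k.
  rewrite (sum_single (j0 := j0)); last by move=> j hj; rewrite Dz ?mul0r //; apply: contra hj => /eqP h; apply/eqP; apply: val_inj; rewrite /= h hj0.
  by rewrite !hD hj0 eqxx mul1r eq_sym.
have Dabs : forall k : 'I_(m * p), \sum_(j < n) `|D k j| = 1.
  move=> k; have [j0 hj0] := ex0 k.
  rewrite (sum_single (j0 := j0)); last by move=> j hj; rewrite Dz ?normr0 //; apply: contra hj => /eqP h; apply/eqP; apply: val_inj; rewrite /= h hj0.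
  by rewrite hD hj0 eqxx normr1.
set mz := \col_k (if blkof k \in S then z k 0 else 0).
exists (- (D^T *m mz)); split.
  move=> i j iS; rewrite mulmxN mulmxA mxE; congr (- _).
  rewrite mxE (sum_single (j0 := blk i j)).
    rewrite mxE; under eq_bigr do rewrite mxE.
    by rewrite DDT eqxx mul1r mxE blkofK iS.
  move=> k hk; rewrite mxE; under eq_bigr do rewrite mxE.
  by rewrite DDT eq_sym (negbTE hk) mul0r.
move=> g.
have p0 : (0 < p)%N by rewrite p1.
set j0 := (Ordinal p0).
have gi : forall j, `|g j 0| <= vnorm_inf g.
  by move=> j; exact: (le_bigmax 0 (fun i => `|g i 0|) j).
have vi0 : 0 <= vnorm_inf g.
  by rewrite /vnorm_inf; elim/big_ind: _ => // x y hx hy; rewrite le_max hx.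
set d := - (D^T *m mz).
have dj : forall j, `|d j 0| <= \sum_(k < m * p) `|D k j| * `|mz k 0|.
  move=> j; rewrite /d mxE normrN mxE.
  apply: le_trans (ler_norm_sum _ _ _) _; apply: ler_sum => k _.
  by rewrite mxE normrM.
have sd : \sum_(j < n) `|d j 0| <= Tsum z S.
  apply: le_trans (ler_sum _ (fun j _ => dj j)) _.
  rewrite exchange_big /=.
  have -> : \sum_(k < m * p) \sum_(j < n) `|D k j| * `|mz k 0| = \sum_(k < m * p) `|mz k 0|.
    by apply: eq_bigr => k _; rewrite -mulr_suml Dabs mul1r.
  rewrite blk_sum (bigID (fun i => i \in S)) /= [X in _ + X]big1 ?addr0; last first.
    by move=> i /negbTE iS; apply: big1 => j _; rewrite !mxE blkofK iS normr0.
  rewrite le_eqVlt; apply/orP; left; apply/eqP; apply: eq_bigr => i iS.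
  rewrite (sum_single (j0 := j0)); last first.
    by move=> j hj; exfalso; move/negP: hj; apply; apply/eqP/val_inj; case: j => j /=; rewrite p1; case: j.
  rewrite /vnorm (sum_single (j0 := j0)); last first.
    by move=> j hj; exfalso; move/negP: hj; apply; apply/eqP/val_inj; case: j => j /=; rewrite p1; case: j.
  by rewrite !mxE blkofK iS sqrtr_sqr.
apply: le_trans (ler_norm _) _; apply: le_trans (ler_norm_sum _ _ _) _.
apply: le_trans (_ : _ <= \sum_(j < n) vnorm_inf g * `|d j 0|) _.
  by apply: ler_sum => j _; rewrite normrM ler_wpM2r.
by rewrite -mulr_sumr ler_wpM2l.
Qed.
End BL.

End M_BL.
Import M_BL.

Module M_TR.
Local Open Scope classical_set_scope.
Local Open Scope ring_scope.
Section TR.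
Variable R : realType.

Lemma Tsum_le_all m p (z : 'cV[R]_(m * p)) (S : {set 'I_m}) :
  Tsum z S <= \sum_(i < m) vnorm (block z i).
Proof.
rewrite /Tsum big_mkcond /=; apply: ler_sum => i _.
by case: (i \in S) => //; apply: vnorm_ge0.
Qed.

Lemma trimmed_le K m p (z : 'cV[R]_(m * p)) (S : {set 'I_m}) :
  #|S| = (m - K)%N -> trimmed K z <= Tsum z S.
Proof. by move=> hS; apply: bigmin_le_cond; rewrite hS eqxx. Qed.

Lemma trimmed_ge0 K m p (z : 'cV[R]_(m * p)) : 0 <= trimmed K z.
Proof.
apply: le_bigmin; first by apply: sumr_ge0 => i _; apply: vnorm_ge0.
by move=> S _; apply: Tsum_ge0.
Qed.

Lemma exists_set m k : (k <= m)%N -> exists S : {set 'I_m}, #|S| = k.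
Proof.
move=> hk; exists (widen_ord hk @: [set: 'I_k])%SET.
rewrite card_imset ?cardsT ?card_ord //.
by move=> x y /(congr1 val) /= h; apply: val_inj.
Qed.

Lemma trimmed_attained K m p (z : 'cV[R]_(m * p)) :
  exists2 S : {set 'I_m}, #|S| = (m - K)%N & trimmed K z = Tsum z S.
Proof.
have [S0 hS0] := exists_set (leq_subr K m).
have P0 : (fun S : {set 'I_m} => #|S| == (m - K)%N) S0 by rewrite /= hS0.
rewrite /trimmed (bigmin_eq_arg _ _ _ _ P0); last by move=> S _; apply: Tsum_le_all.
by case: arg_minP => // S /eqP hS _; exists S.
Qed.

Lemma CS_row k (u v : 'rV[R]_k) : dotr u v <= Num.sqrt (sqn u) * Num.sqrt (sqn v).
Proof.
have [->|vn0] := eqVneq v 0.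
  by rewrite sqn0 sqrtr0 mulr0 /dotr big1 // => i _; rewrite mxE mulr0.
have sv := sqn_gt0 vn0.
set t := dotr u v / sqn v.
have h := sqn_ge0 (u - t *: v).
rewrite -scaleNr sqnD sqnZ sqrrN (dotrC u) dotrZl in h.
have h2 : dotr u v ^+ 2 <= sqn u * sqn v.
  have e : sqn u + 2 * (- t * dotr v u) + t ^+ 2 * sqn v = sqn u - dotr u v ^+ 2 / sqn v.
    by rewrite /t (dotrC v u); field; rewrite gt_eqF.
  by rewrite e subr_ge0 ler_pdivrMr // in h.
rewrite -sqrtrM ?sqn_ge0 //; apply: le_trans (ler_norm _) _.
by rewrite -sqrtr_sqr ler_sqrt // mulr_ge0 // sqn_ge0.
Qed.

Lemma CS_col k (a b : 'cV[R]_k) : \sum_(j < k) a j 0 * b j 0 <= vnorm a * vnorm b.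
Proof.
rewrite !vnormE; apply: le_trans (CS_row a^T b^T).
rewrite /dotr le_eqVlt; apply/orP; left; apply/eqP; apply: eq_bigr => j _; rewrite !mxE; congr (a _ _ * b _ _); apply: val_inj.
Qed.

Lemma vnorm_tri k (a b : 'cV[R]_k) : vnorm (a + b) <= vnorm a + vnorm b.
Proof.
rewrite [vnorm (a + b)]vnormE linearD /=.
apply: sqrt_le_of_sq; first by rewrite addr_ge0 ?vnorm_ge0.
rewrite sqnD !vnormE sqrrD !sqr_sqrtr ?sqn_ge0 //.
rewrite -mulr_natl; have := CS_row a^T b^T; lra.
Qed.

Lemma vnorm_inf_ge0 k (a : 'cV[R]_k) : 0 <= vnorm_inf a.
Proof. by rewrite /vnorm_inf; elim/big_ind: _ => // x y hx hy; rewrite le_max hx. Qed.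

Lemma vinf_ge k (a : 'cV[R]_k) j : `|a j 0| <= vnorm_inf a.
Proof. exact: (le_bigmax 0 (fun i => `|a i 0|) j). Qed.

Lemma vnorm_inf_tri k (a b : 'cV[R]_k) : vnorm_inf (a + b) <= vnorm_inf a + vnorm_inf b.
Proof.
apply: bigmax_le; first by rewrite addr_ge0 ?vnorm_inf_ge0.
move=> j _; rewrite mxE; apply: le_trans (ler_normD _ _) _.
by rewrite lerD ?vinf_ge.
Qed.

Lemma vnorm_inf_le k (a : 'cV[R]_k) : vnorm_inf a <= vnorm a.
Proof.
apply: bigmax_le; first exact: vnorm_ge0.
move=> j _; rewrite -sqrtr_sqr /vnorm ler_sqrt; last by apply: sumr_ge0 => i _; rewrite sqr_ge0.
by rewrite (bigD1 j) //= lerDl; apply: sumr_ge0 => i _; rewrite sqr_ge0.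
Qed.

Lemma vnorm_scale k (u v : 'cV[R]_k) s : 0 <= s -> (forall j, v j 0 = s * u j 0) ->
  vnorm v = s * vnorm u.
Proof.
move=> s0 h; rewrite /vnorm -[s in RHS](ger0_norm s0) -sqrtr_sqr -sqrtrM ?sqr_ge0 //.
by congr Num.sqrt; rewrite mulr_sumr; apply: eq_bigr => j _; rewrite h exprMn.
Qed.

Section bvecs.
Variables (L : nat) (n : 'I_L.+1 -> nat).

Definition bsingle (l : 'I_L.+1) (d : 'cV[R]_(n l)) : bvec R n :=
  fun l' => if l =P l' is ReflectT e then ecast k ('cV[R]_(n k)) e d else 0.

Lemma bsingle_eq (l : 'I_L.+1) (d : 'cV[R]_(n l)) : bsingle d l = d.
Proof.
rewrite /bsingle; case: (l =P l) => // e.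
by rewrite (eq_irrelevance e (erefl l)).
Qed.

Lemma bsingle_neq (l l' : 'I_L.+1) (d : 'cV[R]_(n l)) : l != l' -> bsingle d l' = 0.
Proof. by rewrite /bsingle; case: (l =P l') => // e; rewrite e eqxx. Qed.

Lemma bdot_single (x : bvec R n) (l : 'I_L.+1) (d : 'cV[R]_(n l)) :
  bdot x (bsingle d) = \sum_(j < n l) x l j 0 * d j 0.
Proof.
rewrite /bdot (bigD1 l) //= [X in _ + X]big1 ?addr0.
  by apply: eq_bigr => j _; rewrite bsingle_eq.
move=> l' hl'; rewrite bsingle_neq 1?eq_sym //.
by apply: big1 => j _; rewrite mxE mulr0.
Qed.

Lemma bdot_ext (x x' y y' : bvec R n) : (forall l, x l = x' l) -> (forall l, y l = y' l) ->
  bdot x y = bdot x' y'.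
Proof. by move=> hx hy; apply: eq_bigr => l _; rewrite hx hy. Qed.

Lemma bdotZr (x y : bvec R n) t : bdot x (bscale t y) = t * bdot x y.
Proof.
rewrite /bdot mulr_sumr; apply: eq_bigr => l _; rewrite mulr_sumr.
by apply: eq_bigr => j _; rewrite /bscale mxE mulrCA.
Qed.

Lemma bdot_sq (x : bvec R n) : bdot x x = \sum_(l < L.+1) vnorm (x l) ^+ 2.
Proof.
apply: eq_bigr => l _; rewrite /vnorm sqr_sqrtr; last by apply: sumr_ge0 => j _; rewrite sqr_ge0.
by apply: eq_bigr => j _; rewrite expr2.
Qed.

Lemma bnorm_single (l : 'I_L.+1) (d : 'cV[R]_(n l)) : bnorm (bsingle d) = vnorm d.
Proof.
rewrite /bnorm bdot_single /vnorm; congr Num.sqrt; apply: eq_bigr => j _.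
by rewrite bsingle_eq expr2.
Qed.

Lemma bdotC (x y : bvec R n) : bdot x y = bdot y x.
Proof. by apply: eq_bigr => l _; apply: eq_bigr => j _; rewrite mulrC. Qed.

Lemma bnorm_scale (x : bvec R n) t : 0 <= t -> bnorm (bscale t x) = t * bnorm x.
Proof.
move=> t0; rewrite /bnorm.
have -> : bdot (bscale t x) (bscale t x) = t ^+ 2 * bdot x x.
  by rewrite bdotZr bdotC bdotZr mulrA expr2.
by rewrite sqrtrM ?sqr_ge0 // sqrtr_sqr ger0_norm.
Qed.

Lemma bnorm_ge_block (x : bvec R n) l : vnorm (x l) <= bnorm x.
Proof.
rewrite /bnorm bdot_sq; apply: le_trans (_ : Num.sqrt (vnorm (x l) ^+ 2) <= _).
  by rewrite sqrtr_sqr ger0_norm ?vnorm_ge0.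
rewrite ler_sqrt; last by apply: sumr_ge0 => i _; rewrite sqr_ge0.
by rewrite (bigD1 l) //= lerDl; apply: sumr_ge0 => i _; rewrite sqr_ge0.
Qed.

Lemma bnorm_le_C (x : bvec R n) (C : 'I_L.+1 -> R) : (forall l, vnorm (x l) <= C l) ->
  bnorm x <= Num.sqrt (\sum_(l < L.+1) C l ^+ 2).
Proof.
move=> h; rewrite /bnorm bdot_sq ler_sqrt; last by apply: sumr_ge0 => i _; rewrite sqr_ge0.
apply: ler_sum => l _; rewrite ler_sqr ?nnegrE ?vnorm_ge0 //.
by apply: le_trans (vnorm_ge0 _) (h l).
Qed.

End bvecs.
End TR.

End M_TR.
Import M_TR.

Unset Implicit Arguments. Set Strict Implicit.

Theorem mainTheorem5 (R : realType) (L : nat) (n m p K : 'I_L.+1 -> nat)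
  (gam : 'I_L.+1 -> R)
  (c : forall l : 'I_L.+1, 'cV[R]_(m l * p l))
  (D : forall l : 'I_L.+1, 'M[R]_(m l * p l, n l))
  (M : R) (f : bvec R n -> R) (g : bvec R n -> bvec R n)
  (xs : bvec R n) (C : 'I_L.+1 -> R) :
  (forall l : 'I_L.+1, (0 < l)%N -> 0 < gam l) ->
  (forall l : 'I_L.+1, (0 < l)%N -> (K l < m l)%N) ->
  (forall l : 'I_L.+1, (0 < l)%N -> D l != 0) ->
  M_smooth M f g ->
  (forall l : 'I_L.+1, (0 < l)%N -> exists xb : 'cV[R]_(n l), D l *m xb = c l) ->
  dstationary (fun x : bvec R n => f x +
      \sum_(l < L.+1 | (0 < l)%N) gam l * trimmed (K l) (D l *m x l - c l)) xs ->
  (forall l : 'I_L.+1, 0 < C l) ->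
  (forall l : 'I_L.+1, vnorm (xs l) <= C l) ->
  (forall l : 'I_L.+1, (0 < l)%N ->
     (sigmaK (K l) (D l))^-1 *
        (vnorm (g (bzero R n) l) + M * Num.sqrt (\sum_(k < L.+1) C k ^+ 2)) < gam l
     \/ [/\ p l = 1%N, m l = n l,
            (forall (i : 'I_(m l * p l)) (j : 'I_(n l)), D l i j = ((i : nat) == j)%:R),
            c l = 0 &
            vnorm_inf (g (bzero R n) l) + M * Num.sqrt (\sum_(k < L.+1) C k ^+ 2) < gam l]) ->
  forall l : 'I_L.+1, (0 < l)%N -> trimmed (K l) (D l *m xs l - c l) = 0.
Proof.
move=> hgam hK hD [hgrad hlip] hxb hstat hC hCb hcond l l0.
set z := D l *m xs l - c l.
set T := trimmed (K l) z.
have T0 : 0 <= T by apply: trimmed_ge0.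
apply: le_anti; rewrite T0 andbT leNgt; apply/negP => Tpos.
have [S hS hT] := trimmed_attained (K l) z.
rewrite -/T in hT.
have [xb hxb'] := hxb l l0.
have hz0 : D l *m (xs l - xb) = z by rewrite mulmxBr hxb'.
have TS : 0 < Tsum z S by rewrite -hT.
set Cs := Num.sqrt (\sum_(k < L.+1) C k ^+ 2).
set gd := fun d : 'cV[R]_(n l) => \sum_(j < n l) g xs l j 0 * d j 0.
have hGd : 0 <= M -> vnorm (g xs l - g (bzero R n) l) <= M * Cs.
  move=> M0.
  apply: le_trans (bnorm_ge_block (badd (g xs) (bopp (g (bzero R n)))) l) _.
  apply: le_trans (hlip _ _) _; apply: ler_wpM2l => //.
  apply: le_trans (bnorm_le_C hCb).
  rewrite /bnorm (@bdot_ext _ _ _ _ xs _ xs) // => l'; by rewrite /badd /bopp /bzero oppr0 addr0.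
have [d [hdS hgd]] : exists d : 'cV[R]_(n l),
   (forall i j, i \in S -> (D l *m d) (blk i j) 0 = - z (blk i j) 0) /\
   (0 <= M -> gd d < gam l * T).
  have G0 : 0 <= M -> vnorm (g xs l) <= vnorm (g (bzero R n) l) + M * Cs.
    move=> M0; have -> : g xs l = g (bzero R n) l + (g xs l - g (bzero R n) l) by rewrite addrC subrK.
    by apply: le_trans (vnorm_tri _ _) _; rewrite lerD2l hGd.
  case: (hcond l l0) => [h1 | [hp hm hDid hc h2]].
    have [d [hdS sig0 sigb]] := dir_general (hD l l0) hz0 hS TS.
    exists d; split => // M0.
    set sg := sigmaK (K l) (D l) in h1 sig0 sigb.
    set Gb := vnorm (g (bzero R n) l) + M * Cs in h1 G0.
    have Gb0 : 0 <= Gb by apply: le_trans (G0 M0); apply: vnorm_ge0.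
    have vd : vnorm d <= T / sg by rewrite ler_pdivlMr // mulrC hT.
    apply: le_lt_trans (CS_col _ _) _.
    apply: le_lt_trans (ler_wpM2r (vnorm_ge0 d) (G0 M0)) _.
    apply: le_lt_trans (ler_wpM2l Gb0 vd) _.
    by rewrite mulrA mulrC mulrA ltr_pM2r // mulrC.
  have [d [hdS hb]] := dir_id z S hp hm hDid.
  exists d; split => // M0.
  apply: le_lt_trans (hb _) _; rewrite hT ltr_pM2r //.
  apply: le_lt_trans h2.
  have -> : g xs l = g (bzero R n) l + (g xs l - g (bzero R n) l) by rewrite addrC subrK.
  apply: le_trans (vnorm_inf_tri _ _) _; rewrite lerD2l.
  by apply: le_trans (vnorm_inf_le _) (hGd M0).
have dn0 : d != 0.
  apply/eqP => d0; move: TS; rewrite /Tsum big1 ?ltxx // => i iS.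
  rewrite (@vnorm_scale _ _ (block z i) (block z i) 0) ?mul0r //.
  move=> j; rewrite mxE mul0r; apply/eqP; rewrite -oppr_eq0 -hdS // d0 mulmx0 mxE //.
have vd0 : 0 < vnorm d.
  rewrite vnormE sqrtr_gt0; apply: sqn_gt0; apply: contra dn0 => /eqP h.
  by rewrite -(trmxK d) h trmx0.
set dv := bsingle d.
have M0 : 0 <= M.
  have e : bnorm (badd (badd xs dv) (bopp xs)) = vnorm d.
    rewrite -(bnorm_single d) /bnorm; congr Num.sqrt.
    by apply: bdot_ext => l'; rewrite /badd /bopp /= addrAC subrr add0r.
  have := hlip (badd xs dv) xs; rewrite e.
  move=> h; have := le_trans (sqrtr_ge0 _) h.
  by rewrite pmulr_lge0.
have gdT := hgd M0.
set a := gd d - gam l * T.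
have a0 : a < 0 by rewrite subr_lt0.
set eps := - a / (2 * vnorm d).
have eps0 : 0 < eps by rewrite divr_gt0 // ?oppr_gt0 // mulr_gt0.
have [del del0 hdel] := hgrad xs eps eps0.
set Fo := (fun x : bvec R n => f x +
      \sum_(l' < L.+1 | (0 < l')%N) gam l' * trimmed (K l') (D l' *m x l' - c l')).
have key : forall t, 0 < t -> t < 1 -> t * vnorm d < del ->
    (Fo (badd xs (bscale t dv)) - Fo xs) / t <= a / 2.
  move=> t t0 t1 tdel.
  set xt := badd xs (bscale t dv).
  have xtl : xt l = xs l + t *: d by rewrite /xt /badd /bscale /dv bsingle_eq.
  have xtl' : forall l', l' != l -> xt l' = xs l'.
    by move=> l' h; rewrite /xt /badd /bscale /dv bsingle_neq 1?eq_sym // scaler0 addr0.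
  set zt := D l *m (xs l + t *: d) - c l.
  have hzt : forall i j, i \in S -> zt (blk i j) 0 = (1 - t) * z (blk i j) 0.
    move=> i j iS; rewrite /zt mulmxDr -scalemxAr (addrAC _ (t *: _)) -/z mxE [in X in _ + X]mxE hdS //.
    by rewrite mulrN mulrBl mul1r.
  have Tt : trimmed (K l) zt <= (1 - t) * T.
    apply: le_trans (trimmed_le _ hS) _.
    rewrite hT /Tsum mulr_sumr le_eqVlt; apply/orP; left; apply/eqP; apply: eq_bigr => i iS.
    by apply: vnorm_scale; [rewrite subr_ge0 ltW | move=> j; rewrite [LHS]mxE [in RHS]mxE hzt].
  have hsum : forall y : bvec R n, (forall l', l' != l -> y l' = xs l') ->
     \sum_(l' < L.+1 | (0 < l')%N) gam l' * trimmed (K l') (D l' *m y l' - c l') =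
     gam l * trimmed (K l) (D l *m y l - c l) + \sum_(l' < L.+1 | (0 < l')%N && (l' != l))
        gam l' * trimmed (K l') (D l' *m xs l' - c l').
    move=> y hy; rewrite (bigD1 l) //=; congr (_ + _).
    by apply: eq_bigr => l' /andP [_ h]; rewrite hy.
  have hf : f xt - f xs <= t * gd d + eps * (t * vnorm d).
    have hb : bnorm (bscale t dv) = t * vnorm d by rewrite bnorm_scale ?ltW // bnorm_single.
    have := hdel (bscale t dv); rewrite hb => /(_ tdel).
    rewrite bdotZr bdot_single => h.
    have := le_trans (ler_norm _) h; rewrite /gd; lra.
  have eE : eps * vnorm d = - a / 2 by rewrite /eps; field; rewrite gt_eqF.
  rewrite ler_pdivrMr // /Fo (hsum _ xtl') (hsum xs) // xtl -/zt -/z -/T.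
  have := ler_wpM2l (ltW (hgam l l0)) Tt.
  move: hf; rewrite mulrCA eE /a; lra.
have [lam hlim lam0] := hstat dv.
have a2 : 0 < - a / 2 by rewrite divr_gt0 // oppr_gt0.
have hev := (cvgrPdist_lt _ _).1 hlim _ a2.
have hdv : 0 < del / vnorm d by rewrite divr_gt0.
have : \forall t \near (0^'+)%classic, ((0 < t) /\ (t < 1) /\ (t < del / vnorm d)) /\
    `|lam - (Fo (badd xs (bscale t dv)) - Fo xs) / t| < - a / 2.
  near=> t; split; [split; [|split] |].
  - by near: t; apply: nbhs_right_gt.
  - by near: t; apply: nbhs_right_lt; exact: ltr01.
  - by near: t; apply: nbhs_right_lt.
  - by near: t; exact: hev.
move=> /(filter_ex (FF := at_right_proper_filter 0)) [t [[t0 [t1 t2]] ht]].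
have := key t t0 t1; rewrite -ltr_pdivlMr // => /(_ t2) hk.
have := le_lt_trans (ler_norm _) ht; move: hk lam0; lra.
Unshelve. all: by end_near.
Qed.
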